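(* Let $\varphi$ be a primitive $k$-uniform morphism on $\{0,1\}$ with $\varphi(0)$ beginning with $0$, and let $a=|\varphi(0)|_0$, $b=|\varphi(0)|_1$, $c=|\varphi(1)|_0$, $d=|\varphi(1)|_1$ (so $a+b=c+d=k$). Let $w=\lim_{n\to\infty}\varphi^n(0)$ be the infinite fixed point of $\varphi$ starting with $0$. For a finite or infinite binary word $u$, let $g_u$ be its graphic with respect to the vectors $\mathbf v_0=(1,-b)$, $\mathbf v_1=(1,c)$. Then: 1. If $g_{\varphi(0)}(x)=0$ for some real $x$ with $0<x\le k$, then $w$ is weak abelian periodic. 2. If $g_{\varphi(0)}(k)\ge -b$, then $w$ is weak abelian periodic. 3. Suppose that $g_{\varphi(0)}(x)\neq 0$ for all real $x\in(0,k]$ and $g_{\varphi(0)}(k)<-b$. Put $\Delta=g_{\varphi(0)}(k)$, $A=\max\{g_{\varphi(0)}(i): 1\le i\le k,\ \varphi(0)_i=1\}$ and $t=\max\{g_{\varphi(1)}(i): 1\le i\le k,\ \varphi(1)_i=1\}$, where $u_i$ denotes the $i$-th letter of $u$. Then $w$ is weak abelian periodic if and only if $\Delta\cdot\frac{A-c}{-b}+t\ge A$.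
   Context: A morphism $\varphi$ on $\{0,1\}^*$ is $k$-uniform if $|\varphi(0)|=|\varphi(1)|=k$, and primitive if for some $m$ both $\varphi^m(0)$ and $\varphi^m(1)$ contain both letters. $|u|_a$ is the number of occurrences of letter $a$ in $u$. The graphic $g_u$ of a binary word $u=u_1u_2\cdots$ with respect to vectors $\mathbf v_0=(1,-b)$, $\mathbf v_1=(1,c)$ is the piecewise linear function on $[0,|u|]$ (or $[0,\infty)$) with $g_u(0)=0$, $g_u(n)=c\,|u_1\cdots u_n|_1-b\,|u_1\cdots u_n|_0$ for integers $n$, and linear between consecutive integers. For a finite word $v$, $\rho_a(v)=|v|_a/|v|$ for nonempty $v$. An infinite binary word $w$ is weak abelian periodic if $w=v_0v_1v_2\cdots$ with $v_0$ finite and $v_1,v_2,\dots$ nonempty finite words such that $\rho_a(v_i)=\rho_a(v_j)$ for $a\in\{0,1\}$ and all $i,j\ge1$. *)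

(* Defs.v *)
(* Letters: false = 0, true = 1. *)
From HB Require Import structures.
From mathcomp Require Import all_boot all_order all_algebra.
From mathcomp Require Import reals.
Set Implicit Arguments. Unset Strict Implicit. Unset Printing Implicit Defensive.
Import Order.TTheory GRing.Theory Num.Theory.
Local Open Scope ring_scope.

Definition morph (u0 u1 : seq bool) (u : seq bool) : seq bool :=
  flatten [seq (if x then u1 else u0) | x <- u].

Definition morphN (u0 u1 : seq bool) (n : nat) (u : seq bool) : seq bool :=
  iter n (morph u0 u1) u.

Definition uniform (k : nat) (u0 u1 : seq bool) : Prop :=
  size u0 = k /\ size u1 = k.

Definition primitive (u0 u1 : seq bool) : Prop :=
  exists m : nat, forall x y : bool, y \in morphN u0 u1 m [:: x].

(* w : nat -> bool is the limit of phi^n(0): every phi^n(0) is a prefix of w *)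
Definition is_fixed_point_from0 (u0 u1 : seq bool) (w : nat -> bool) : Prop :=
  forall n i, (i < size (morphN u0 u1 n [:: false]))%N ->
    w i = nth false (morphN u0 u1 n [:: false]) i.

Definition rho (a : bool) (v : seq bool) : rat :=
  (count_mem a v)%:R / (size v)%:R.

Definition factor (w : nat -> bool) (m n : nat) : seq bool :=
  [seq w j | j <- iota m (n - m)].

(* w = v0 v1 v2 ... with v0 = w[0, p 0), v_(i+1) = w[p i, p (i+1)) nonempty *)
Definition weak_abelian_periodic (w : nat -> bool) : Prop :=
  exists p : nat -> nat, (forall i, (p i < p i.+1)%N) /\
    forall (a : bool) (i j : nat),
      rho a (factor w (p i) (p i.+1)) = rho a (factor w (p j) (p j.+1)).

(* Graphic of a finite word u w.r.t. v0 = (1,-b), v1 = (1,c): the piecewise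
   linear function with g(0)=0, slope -b on [i,i+1] if u_(i+1)=0 and slope c
   if u_(i+1)=1 (on [0, |u|]). *)
Definition graphic (R : realType) (b c : nat) (u : seq bool) (x : R) : R :=
  \sum_(i < size u)
     (if nth false u i then (c%:R : R) else - (b%:R : R))
       * Num.min 1 (Num.max 0 (x - (i%:R : R))).

(* maximum of a nonempty list (0 for the empty list; not used in that case) *)
Definition smax (R : realType) (s : seq R) : R :=
  match s with [::] => 0 | x :: s' => foldr Num.max x s' end.

Definition max_after_one (R : realType) (b c : nat) (u : seq bool) : R :=
  smax [seq graphic b c u (i%:R : R) | i <- iota 1 (size u) & nth false u i.-1].

(* Main.v *)
Require Import Defs.
From HB Require Import structures.
From mathcomp Require Import all_boot all_order all_algebra.
From mathcomp Require Import reals.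
From mathcomp Require Import zify ring lra.
From Stdlib Require Import Classical.
Import Order.TTheory GRing.Theory Num.Theory.
Local Open Scope ring_scope.

Lemma count_bool (s : seq bool) : (count_mem false s + count_mem true s)%N = size s.
Proof. rewrite -(count_predC (pred1 false)); congr addn; by apply: eq_count => -[]. Qed.

Lemma arith_final (K m X n P0 L0 G : int) : 0 <= K -> 1 <= X -> 0 <= P0 -> 0 <= L0 -> 0 <= G ->
  (K + m) * X <= K * n -> n - P0 <= L0 * (2 * G * X) ->
  K * P0 + 2 * K * L0 * G + 1 <= m -> False.
Proof.
move=> HK HX HP HL HG H1 H2 H3.
have h1 : K * (n - P0) <= K * (L0 * (2 * G * X)) by apply: ler_wpM2l.
have h2 : (K * P0 + 2 * K * L0 * G + 1) * X <= m * X by apply: ler_wpM2r; lia.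
have h3 : K * P0 <= (K * P0) * X.
  by rewrite -{1}[K * P0]mulr1; apply: ler_wpM2l; [nia | lia].
have h4 : 0 <= K * X by nia.
lia.
Qed.
Lemma arith1 (S x : int) : S <= -1 -> 0 <= x -> x <= -(S*x).
Proof. nia. Qed.
Lemma arith2 (L0 A B Y x : int) : 1 <= L0 -> B <= 0 -> -A <= Y -> x <= -(L0*(A - B)) -> x <= L0 * Y.
Proof. move=> H1 H2 H3 H4. have : L0 * (- A) <= L0 * Y by apply: ler_wpM2l; lia. have : L0 * B <= 0 by nia. nia. Qed.

Lemma arith3 (S x i : int) : 1 <= S -> i <= x -> 0 <= i -> i <= S * x.
Proof. nia. Qed.

Section Main.
Variables (k : nat) (u0 u1 : seq bool) (w : nat -> bool).
Hypothesis Hu : uniform k u0 u1.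
Hypothesis Hprim : primitive u0 u1.
Hypothesis Hu00 : nth true u0 0 = false.
Hypothesis Hfix : is_fixed_point_from0 u0 u1 w.

Let b := count_mem true u0.
Let a := count_mem false u0.
Let c := count_mem false u1.
Let d := count_mem true u1.

Definition phi (x : bool) := if x then u1 else u0.
Definition st (x : bool) : int := if x then (c%:Z) else - (b%:Z).
Definition Hw (n : nat) : int := \sum_(0 <= i < n) st (w i).
Definition Gu (u : seq bool) (j : nat) : int := \sum_(0 <= i < j) st (nth false u i).
Definition lam : int := a%:Z - c%:Z.

Lemma size0 : size u0 = k. Proof. by case: Hu. Qed.
Lemma size1 : size u1 = k. Proof. by case: Hu. Qed.
Lemma size_phi x : size (phi x) = k. Proof. by case: x; rewrite /= ?size0 ?size1. Qed.

Lemma ab : (a + b)%N = k. Proof. by rewrite /a /b count_bool size0. Qed.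
Lemma cd : (c + d)%N = k. Proof. by rewrite /c /d count_bool size1. Qed.

Lemma size_morph s : size (morph u0 u1 s) = (k * size s)%N.
Proof.
elim: s => [|x s IH]; first by rewrite /morph /= muln0.
rewrite /morph /= size_cat -/(morph u0 u1 s) IH.
by case: x; rewrite ?size0 ?size1 mulnS.
Qed.

Lemma morphNS n x : morphN u0 u1 n.+1 x = morph u0 u1 (morphN u0 u1 n x).
Proof. by []. Qed.

Lemma size_morphN n : size (morphN u0 u1 n [:: false]) = (k ^ n)%N.
Proof.
elim: n => [|n IH] //.
by rewrite morphNS size_morph IH expnS.
Qed.

Lemma nth_morph s n j : (n < size s)%N -> (j < k)%N ->
  nth false (morph u0 u1 s) (k * n + j) = nth false (phi (nth false s n)) j.
Proof.
elim: s n => [|x s IH] [|n] //= Hn Hj.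
- by rewrite /morph /= nth_cat; case: x; rewrite ?size0 ?size1 muln0 add0n Hj.
- rewrite /morph /= nth_cat -/(morph u0 u1 s).
  have -> : (k * n.+1 + j)%N = (k + (k * n + j))%N by rewrite mulnS addnA.
  case: x; rewrite ?size0 ?size1 ltnNge leq_addr /= addKn; exact: IH.
Qed.

Lemma all_inv (x : bool) : all (pred1 x) (phi x) ->
  forall m, all (pred1 x) (morphN u0 u1 m [:: x]).
Proof.
move=> Hx; elim=> [|m IH]; first by rewrite /= eqxx.
rewrite morphNS.
elim: (morphN u0 u1 m [:: x]) IH => [|y s IH'] //= /andP[/eqP -> Hs].
rewrite /morph /= all_cat -/(morph u0 u1 s) Hx /=; exact: IH'.
Qed.

Lemma b_ge1 : (1 <= b)%N.
Proof.
case: Hprim => m Hm; rewrite lt0n; apply/negP => /eqP/count_memPn Hb.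
have H : all (pred1 false) (phi false).
  apply/allP => y Hy; case: y Hy => //= Hy; by rewrite Hy in Hb.
have := all_inv _ H m; move/allP/(_ true (Hm false true)); done.
Qed.

Lemma c_ge1 : (1 <= c)%N.
Proof.
case: Hprim => m Hm; rewrite lt0n; apply/negP => /eqP/count_memPn Hb.
have H : all (pred1 true) (phi true).
  apply/allP => y Hy; case: y Hy => //= Hy; by rewrite Hy in Hb.
have := all_inv _ H m; move/allP/(_ false (Hm true false)); done.
Qed.

Lemma k_ge2 : (2 <= k)%N.
Proof.
have Hk : (0 < k)%N.
  rewrite -size0 lt0n; apply/negP => /eqP/size0nil E; have H0 := Hu00; by rewrite E in H0.
have Hs := size0.
case Ek: k Hk Hs => [|[|k']] // _ Hs.
have := b_ge1; rewrite /b.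
have H0 := Hu00; move: H0; case E: u0 Hs => [|x [|y s]] //= _ ->; done.
Qed.

Lemma wE n j : (j < k)%N -> w (k * n + j) = nth false (phi (w n)) j.
Proof.
move=> Hj.
have k2 := k_ge2.
have Hn : (n < k ^ n)%N by apply: ltn_expl.
have H1 : (k * n + j < size (morphN u0 u1 n.+1 [:: false]))%N.
  rewrite size_morphN expnS.
  apply: (@leq_trans (k * n.+1)); first by rewrite mulnS addnC ltn_add2r.
  by rewrite leq_mul2l Hn orbT.
rewrite (Hfix _ _ H1) (@Hfix n n); last by rewrite size_morphN.
rewrite morphNS nth_morph //.
by rewrite size_morphN.
Qed.

Lemma w0 : w 0 = false.
Proof. by rewrite (Hfix 0 0). Qed.

Lemma HwS n : Hw n.+1 = Hw n + st (w n).
Proof. by rewrite /Hw big_nat_recr. Qed.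

Lemma GuS u n : Gu u n.+1 = Gu u n + st (nth false u n).
Proof. by rewrite /Gu big_nat_recr. Qed.

Lemma Hw_add m j : Hw (m + j) = Hw m + \sum_(0 <= i < j) st (w (m + i)).
Proof.
elim: j => [|j IH]; first by rewrite addn0 big_geq // addr0.
by rewrite addnS HwS IH big_nat_recr //= addrA.
Qed.

Lemma Gu_size u : Gu u (size u) = (c%:Z) * (count_mem true u)%:Z - (b%:Z) * (count_mem false u)%:Z.
Proof.
rewrite /Gu -(big_nth false xpredT st).
elim: u => [|x u IH]; first by rewrite big_nil /=; ring.
rewrite big_cons IH; case: x => /=; rewrite /st /=; lia.
Qed.

Lemma Gu_k x : Gu (phi x) k = lam * st x.
Proof.
rewrite -(size_phi x) Gu_size; have := ab; have := cd.
case: x => /=; rewrite /lam /st -/a -/b -/c -/d; lia.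
Qed.

Lemma Hw_rec n j : (j <= k)%N -> Hw (k * n + j) = lam * Hw n + Gu (phi (w n)) j.
Proof.
have Hk : forall n, Hw (k * n) = lam * Hw n.
  clear n; elim=> [|n IH]; first by rewrite muln0 /Hw big_geq // mulr0.
  rewrite mulnS addnC Hw_add IH HwS mulrDr -Gu_k /Gu; congr (_ + _).
  apply: eq_big_nat => i /andP[_ Hi]; by rewrite wE.
move=> Hj; rewrite Hw_add Hk /Gu; congr (_ + _).
apply: eq_big_nat => i /andP[_ Hi]; rewrite wE //; exact: leq_trans Hi Hj.
Qed.

Lemma Hw_kn n : Hw (k * n) = lam * Hw n.
Proof. by rewrite -[(k * n)%N]addn0 Hw_rec // /Gu big_geq // addr0. Qed.

Lemma Hw_pow m n : Hw (k ^ m * n) = lam ^+ m * Hw n.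
Proof.
elim: m => [|m IH]; first by rewrite expn0 mul1n expr0 mul1r.
by rewrite expnS -mulnA Hw_kn IH exprS mulrA.
Qed.

Lemma Hw1 : Hw 1 = - (b%:Z).
Proof. by rewrite HwS /Hw big_geq // w0 add0r. Qed.

Lemma Hw_small j : (j <= k)%N -> Hw j = Gu u0 j.
Proof.
move=> Hj; have := Hw_rec 0 _ Hj; rewrite muln0 add0n => ->.
by rewrite /Hw big_geq // mulr0 add0r w0.
Qed.


Lemma sum_st (s : seq bool) : \sum_(x <- s) st x =
  (c%:Z) * (count_mem true s)%:Z - (b%:Z) * (count_mem false s)%:Z.
Proof.
elim: s => [|x u IH]; first by rewrite big_nil /=; ring.
rewrite big_cons IH; case: x => /=; rewrite /st /=; lia.
Qed.

Lemma size_factor m1 m2 : size (factor w m1 m2) = (m2 - m1)%N.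
Proof. by rewrite /factor size_map size_iota. Qed.

Lemma Hw_diff m1 m2 : (m1 <= m2)%N -> Hw m2 - Hw m1 =
  (c%:Z) * (count_mem true (factor w m1 m2))%:Z - (b%:Z) * (count_mem false (factor w m1 m2))%:Z.
Proof.
move=> /subnKC <-; set j := (m2 - m1)%N.
rewrite Hw_add addrC addKr -sum_st /factor addKn big_map.
by rewrite -[m1]addn0 iotaDl big_map addn0 /index_iota subn0.
Qed.

Lemma wap_level (h : int) : (forall N, exists n, (N <= n)%N /\ Hw n = h) ->
  weak_abelian_periodic w.
Proof.
move=> HN.
have HN' : forall N, exists n, (N <= n)%N && (Hw n == h).
  move=> N; case: (HN N) => n [H1 H2]; exists n; by rewrite H1 H2 eqxx.
pose nxt N := xchoose (HN' N).
have Hnxt : forall N, (N <= nxt N)%N /\ Hw (nxt N) = h.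
  move=> N; have /andP[H1 /eqP H2] := xchooseP (HN' N); done.
pose p i := iter i (fun m => nxt m.+1) (nxt 0).
have Hph : forall i, Hw (p i) = h.
  by case=> [|i]; [exact: (proj2 (Hnxt 0)) | exact: (proj2 (Hnxt _))].
have Hp : forall i, (p i < p i.+1)%N /\ Hw (p i) = h /\ Hw (p i.+1) = h.
  move=> i; have [H1 H2] := Hnxt (p i).+1.
  by split; [exact: H1 | split; apply: Hph].
have Hrho : forall (x : bool) i, rho x (factor w (p i) (p i.+1)) =
    (if x then b else c)%:R / (b + c)%:R.
  move=> x i; have [H1 [H2 H3]] := Hp i.
  have := Hw_diff _ _ (ltnW H1); rewrite H2 H3 subrr => E.
  have Hz := count_bool (factor w (p i) (p i.+1)).
  rewrite size_factor in Hz.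
  have bpos := b_ge1.
  rewrite /rho; apply/eqP; rewrite eqr_div; last first.
  - by rewrite pnatr_eq0; lia.
  - by rewrite pnatr_eq0 size_factor; lia.
  rewrite -!natrM eqr_nat size_factor; apply/eqP.
  case: x; nia.
exists p; split; first by move=> i; case: (Hp i).
by move=> x i j; rewrite !Hrho.
Qed.

Lemma pigeon (lo : int) (m : nat) :
  (forall N, exists n, (N <= n)%N /\ lo <= Hw n < lo + m%:Z) ->
  exists h, forall N, exists n, (N <= n)%N /\ Hw n = h.
Proof.
elim: m => [|m IH] H.
  by case: (H 0%N) => n [_ /andP[H1 H2]]; move: H1 H2; lia.
case: (classic (forall N, exists n, (N <= n)%N /\ Hw n = lo + m%:Z)) => Hc.
  by exists (lo + m%:Z).
move/not_all_ex_not: Hc => [N0 HN0].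
apply: IH => N; case: (H (maxn N N0)) => n [H1 H2].
move: H1; rewrite geq_max => /andP[H1a H1b].
exists n; split=> //.
have Hne : Hw n <> lo + m%:Z.
  by move=> E; apply: HN0; exists n; split.
move: H2 Hne; lia.
Qed.

Lemma st_le x : st x <= c%:Z.
Proof. by case: x; rewrite /st //; lia. Qed.

Lemma cross_wap (h : int) :
  (forall N, exists n1 n2, (N <= n1)%N /\ (n1 <= n2)%N /\ Hw n1 < h /\ h <= Hw n2) ->
  weak_abelian_periodic w.
Proof.
move=> H.
have Hx : forall dd n1, Hw n1 < h -> h <= Hw (n1 + dd) ->
    exists n, (n1 <= n)%N /\ h <= Hw n < h + c%:Z.
  elim=> [|dd IH] n1 H1 H2; first by move: H1 H2; rewrite addn0; lia.
  case: (leP h (Hw n1.+1)) => H3.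
    exists n1.+1; split=> //; apply/andP; split=> //.
    have := st_le (w n1); rewrite HwS in H3 *; lia.
  have H4 : h <= Hw (n1.+1 + dd) by rewrite addSnnS.
  have [n [Hn1 Hn2]] := IH n1.+1 H3 H4.
  by exists n; split=> //; exact: ltnW.
have [hh Hh] : exists hh, forall N, exists n, (N <= n)%N /\ Hw n = hh.
  apply: (@pigeon h c) => N.
  case: (H N) => n1 [n2 [H1 [H2 [H3 H4]]]].
  move/subnKC: H2 H4 => <- H4.
  have [n [Hn1 Hn2]] := Hx _ _ H3 H4.
  by exists n; split=> //; exact: leq_trans Hn1.
exact: wap_level Hh.
Qed.


Lemma Gu_R (R : realType) u i : ((Gu u i)%:~R : R) =
  \sum_(0 <= j < i) (if nth false u j then (c%:R : R) else - (b%:R : R)).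
Proof.
elim: i => [|i IH]; first by rewrite /Gu !big_geq.
rewrite GuS intrD IH big_nat_recr //=; congr (_ + _).
by case: (nth false u i); rewrite /st ?intrN.
Qed.

Lemma graphic_lin (R : realType) u i (x : R) : (i < size u)%N ->
  i%:R <= x -> x <= i%:R + 1 ->
  graphic b c u x = (Gu u i)%:~R + (st (nth false u i))%:~R * (x - i%:R).
Proof.
move=> Hi Hx1 Hx2.
rewrite /graphic -(big_mkord xpredT (fun j : nat => (if nth false u j then (c%:R : R) else - (b%:R : R)) * Num.min 1 (Num.max 0 (x - j%:R)))).
rewrite (@big_cat_nat _ _ _ i 0 (size u)) ?leq0n ?(ltnW Hi) //=.
rewrite (@big_cat_nat _ _ _ i.+1 i (size u)) ?leqnSn //= big_nat1.
rewrite [X in _ + (_ + X)]big1_seq; last first.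
  move=> j /andP[_]; rewrite mem_index_iota => /andP[Hj1 Hj2].
  have Hj : (i.+1 <= j)%N := Hj1.
  have : (i%:R + 1 <= (j%:R : R)) by rewrite natr1 ler_nat.
  move=> Hj'; rewrite max_l ?min_r ?mulr0 //; lra.
rewrite addr0 Gu_R; congr (_ + _).
  apply: eq_big_nat => j /andP[_ Hj].
  have : ((j%:R : R) + 1 <= i%:R) by rewrite natr1 ler_nat.
  move=> Hj'; rewrite max_r ?min_l ?mulr1 //; lra.
have -> : Num.min 1 (Num.max 0 (x - i%:R)) = x - i%:R.
  rewrite max_r ?min_r //; lra.
by case: (nth false u i); rewrite /st ?intrN.
Qed.

Lemma graphic_nat (R : realType) u j : (j <= size u)%N ->
  graphic b c u (j%:R : R) = (Gu u j)%:~R.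
Proof.
case: j => [|j] Hj.
  rewrite /graphic big1 ?/Gu ?big_geq // => i _.
  by rewrite sub0r max_l ?min_r ?mulr0 // oppr_le0 ler0n.
rewrite (@graphic_lin R u j) //; last by rewrite -natr1.
- by rewrite GuS intrD -natr1 addrAC subrr add0r mulr1.
all: try by rewrite ler_nat.
Qed.


Lemma u0_0 : nth false u0 0 = false.
Proof.
have Hk := k_ge2.
by rewrite (@set_nth_default _ u0 true false 0) ?Hu00 // size0; lia.
Qed.

Lemma Gu0_1 : Gu u0 1 = - (b%:Z).
Proof.
have Hk := k_ge2.
rewrite GuS /Gu big_geq // add0r (@set_nth_default _ u0 true false 0) ?Hu00 //.
by rewrite size0; lia.
Qed.

Lemma Gu0_neg (R : realType) :
  (forall x : R, 0 < x -> x <= k%:R -> graphic b c u0 x != 0) ->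
  forall j, (1 <= j)%N -> (j <= k)%N -> Gu u0 j < 0.
Proof.
move=> Hx; elim=> [|j IH] // Hj1 Hj2.
case: j IH Hj1 Hj2 => [|j] IH _ Hj2.
  rewrite Gu0_1; have := b_ge1; lia.
have Hg : Gu u0 j.+1 < 0 by apply: IH => //; exact: ltnW.
case: (ltP (Gu u0 j.+2) 0) => // Hg2.
exfalso.
have Hs := GuS u0 j.+1.
set g := Gu u0 j.+1 in Hg Hs *.
set s0 := st (nth false u0 j.+1) in Hs *.
have Hs0 : 0 < s0 by lia.
pose G : R := g%:~R. pose S : R := s0%:~R.
have HG : G < 0 by rewrite /G ltrz0.
have HS : 0 < S by rewrite /S ltr0z.
have HGS : 0 <= G + S by rewrite /G /S -intrD ler0z; lia.
pose x : R := j.+1%:R + (- G) / S.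
have Hth0 : 0 < (- G) / S by apply: divr_gt0; lra.
have Hth1 : (- G) / S <= 1 by rewrite ler_pdivrMr //; lra.
have Hsz : (j.+1 < size u0)%N by rewrite size0.
have := Hx x; rewrite (@graphic_lin R u0 j.+1 x) //; last first.
- rewrite /x; lra.
- rewrite /x; lra.
rewrite -/g -/s0 -/G -/S.
have -> : G + S * (x - j.+1%:R) = 0.
  by rewrite /x addrAC subrr add0r mulrC divfK ?addrN // gt_eqF.
have Hx1 : 0 < x.
  rewrite /x; have : (0 : R) <= j.+1%:R by []; lra.
have Hx2 : x <= k%:R.
  rewrite /x; have : (j.+2%:R : R) <= k%:R by rewrite ler_nat.
  rewrite -natr1; lra.
by rewrite eqxx => H; have := H Hx1 Hx2.
Qed.

Lemma zero_pos (R : realType) :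
  (exists x : R, [/\ 0 < x, x <= k%:R & graphic b c u0 x = 0]) ->
  exists j, [/\ (1 <= j)%N, (j <= k)%N & 0 <= Gu u0 j].
Proof.
move=> [x [H1 H2 H3]]; apply: NNPP => Hn.
have Hall : forall j, (1 <= j)%N -> (j <= k)%N -> Gu u0 j < 0.
  move=> j Hj1 Hj2; case: (ltP (Gu u0 j) 0) => // H; exfalso; apply: Hn.
  by exists j.
have Hi : forall i, (i <= k)%N -> forall y : R, 0 < y -> y <= i%:R -> graphic b c u0 y < 0.
  elim=> [|i IH] Hik y Hy1 Hy2; first by exfalso; move: Hy2; rewrite mulr0n => H; lra.
  case: (leP y i%:R) => Hyi; first by apply: IH => //; exact: ltnW.
  rewrite (@graphic_lin R u0 i y) ?size0 //; last first.
  - by rewrite natr1 -[i.+1]/(i.+1) .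
  - exact: ltW.
  have HGi : Gu u0 i <= 0.
    case: i {IH Hyi Hy2} Hik => [|i] Hik; first by rewrite /Gu big_geq.
    by apply: ltW; apply: Hall => //; exact: ltnW.
  have HGi1 := Hall _ (ltn0Sn i) Hik; rewrite GuS in HGi1.
  set G := Gu u0 i in HGi HGi1 *; set S := st (nth false u0 i) in HGi1 *.
  have HG' : (G%:~R : R) <= 0 by rewrite lerz0.
  have HGS' : (G%:~R : R) + S%:~R < 0 by rewrite -intrD ltrz0.
  have Ht1 : y - i%:R <= 1 by rewrite -natr1 in Hy2; lra.
  have Ht0 : 0 < y - i%:R by lra.
  nra.
have := Hi k (leqnn k) x H1 H2; rewrite H3; lra.
Qed.


Lemma foldr_max (R : realType) (x : R) (s : seq R) :
  foldr Num.max x s \in x :: s /\ forall y, y \in x :: s -> y <= foldr Num.max x s.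
Proof.
elim: s => [|y s [IH1 IH2]].
  by rewrite /=; split; [rewrite inE eqxx | move=> y; rewrite inE => /eqP ->].
rewrite [foldr _ _ (_ :: _)]/=.
split.
  case: (leP y (foldr Num.max x s)) => H.
  - by move: IH1; rewrite !inE => /orP[->|->]; rewrite ?orbT.
  - by rewrite !inE eqxx ?orbT.
move=> z; rewrite !inE => /or3P[/eqP ->| /eqP -> | Hz].
- by rewrite le_max IH2 ?inE ?eqxx ?orbT.
- by rewrite le_max lexx.
- by rewrite le_max IH2 ?inE ?Hz ?orbT.
Qed.

Lemma smax_prop (R : realType) (s : seq R) : s != [::] ->
  smax s \in s /\ forall y, y \in s -> y <= smax s.
Proof. by case: s => [|x s] //= _; exact: foldr_max. Qed.

Lemma peak_max (R : realType) u : true \in u ->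
  (exists i, [/\ (1 <= i)%N, (i <= size u)%N, nth false u i.-1 &
     max_after_one R b c u = (Gu u i)%:~R]) /\
  (forall i, (1 <= i)%N -> (i <= size u)%N -> nth false u i.-1 ->
     (Gu u i)%:~R <= max_after_one R b c u).
Proof.
move=> Hin.
set L := [seq graphic b c u (i%:R : R) | i <- iota 1 (size u) & nth false u i.-1].
have Hmem : forall i, (1 <= i)%N -> (i <= size u)%N -> nth false u i.-1 ->
    (Gu u i)%:~R \in L.
  move=> i H1 H2 H3; rewrite -graphic_nat //; apply: map_f.
  by rewrite mem_filter H3 mem_iota H1 add1n ltnS H2.
have HL : L != [::].
  have H1 : (1 <= (index true u).+1)%N by [].
  have H2 : ((index true u).+1 <= size u)%N by rewrite index_mem.
  have H3 : nth false u (index true u).+1.-1 by rewrite /= nth_index.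
  have := Hmem _ H1 H2 H3; by case: (L).
have [Hs1 Hs2] := @smax_prop R L HL.
rewrite /max_after_one -/L; split; last first.
  by move=> i H1 H2 H3; apply: Hs2; apply: Hmem.
move: Hs1; case/mapP => i; rewrite mem_filter mem_iota => /andP[H3 /andP[H1 H2]] ->.
move: H2; rewrite add1n ltnS => H2.
by exists i; split=> //; rewrite graphic_nat.
Qed.

Lemma w_small j : (j < k)%N -> w j = nth false u0 j.
Proof. by move=> Hj; have := wE 0 j Hj; rewrite muln0 add0n w0. Qed.

Lemma Hw_kpow m : Hw (k ^ m) = lam ^+ m * (- (b%:Z)).
Proof. by rewrite -[(k ^ m)%N]muln1 Hw_pow Hw1. Qed.

Lemma lam_pow_ge m : 2 <= lam -> (m%:Z + 1) <= lam ^+ m.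
Proof.
move=> Hl; elim: m => [|m IH]; first by rewrite expr0.
rewrite exprS; have : 1 <= lam ^+ m by lia.
move=> H; nia.
Qed.

Lemma k_big N : (N < k ^ N)%N.
Proof. by apply: ltn_expl; exact: k_ge2. Qed.

Lemma case2 : lam <= 1 -> weak_abelian_periodic w.
Proof.
move=> Hl; have bpos := b_ge1; have Hk := k_ge2.
case: (leP (-1) lam) => Hl2.
  have [h Hh] : exists h, forall N, exists n, (N <= n)%N /\ Hw n = h.
    apply: (@pigeon (- (b%:Z)) b.+1) => N.
    exists (k ^ (2 * N.+1))%N; split.
      apply: leq_trans (ltnW (k_big N)) _; apply: leq_pexp2l; lia.
    rewrite Hw_kpow exprM.
    have Hsq : lam * lam = 1 \/ lam * lam = 0.
      have : lam = -1 \/ lam = 0 \/ lam = 1 by lia.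
      by case=> [->|[->|->]]; [left|right|left].
    rewrite expr2; case: Hsq => ->.
    - by rewrite expr1n mul1r; apply/andP; split; lia.
    - by rewrite expr0n /= mul0r; apply/andP; split; lia.
  exact: wap_level Hh.
apply: (@cross_wap 0) => N.
exists (k ^ (2 * N))%N, (k ^ (2 * N).+1)%N; split.
  apply: leq_trans (ltnW (k_big N)) _; apply: leq_pexp2l; lia.
split; first by apply: leq_pexp2l; lia.
rewrite !Hw_kpow exprSr exprM.
have Hp : 0 < (lam ^+ 2) ^+ N by apply: exprn_gt0; rewrite expr2; nia.
set P := (lam ^+ 2) ^+ N in Hp *.
split; nia.
Qed.

Lemma case1 : 2 <= lam -> (exists j, [/\ (1 <= j)%N, (j <= k)%N & 0 <= Gu u0 j]) ->
  weak_abelian_periodic w.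
Proof.
move=> Hl [j [Hj1 Hj2 Hj3]]; have bpos := b_ge1.
apply: (@cross_wap 0) => N.
exists (k ^ N)%N, (k ^ N * j)%N; split; first exact: ltnW (k_big N).
split; first by rewrite leq_pmulr.
rewrite Hw_kpow Hw_pow Hw_small //.
have Hp : 0 < lam ^+ N by apply: exprn_gt0; lia.
set P := lam ^+ N in Hp *.
split; nia.
Qed.

Lemma case3_wap (Ai ti : int) iA it : 2 <= lam ->
  (1 <= iA)%N -> (iA <= k)%N -> nth false u0 iA.-1 -> Gu u0 iA = Ai ->
  (1 <= it)%N -> (it <= k)%N -> nth false u1 it.-1 -> Gu u1 it = ti ->
  Ai <= lam * (Ai - c%:Z) + ti -> weak_abelian_periodic w.
Proof.
move=> Hl HiA1 HiA2 HiA3 HiA4 Hit1 Hit2 Hit3 Hit4 Hcond.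
have bpos := b_ge1; have Hk := k_ge2.
have Hpk : forall N, exists n, [/\ (N <= n)%N, (2 <= n)%N, w n.-1 & Ai <= Hw n].
  elim=> [|N [n [Hn1 Hn2 Hn3 Hn4]]].
    exists iA; split=> //.
    - case: iA HiA1 HiA3 {HiA2 HiA4} => [|[|i]] //=; by rewrite u0_0.
    - by rewrite w_small ?HiA3 //; case: iA HiA1 HiA2 {HiA3 HiA4} => //.
    - by rewrite Hw_small // HiA4.
  case: (ltnP N n) => HNn; first by exists n; split.
  exists (k * n.-1 + it)%N; split.
  - nia.
  - nia.
  - have -> : (k * n.-1 + it).-1 = (k * n.-1 + it.-1)%N by case: (it) Hit1 => [|i] // _; rewrite addnS.
    rewrite wE; last by lia.
    by rewrite Hn3.
  - rewrite Hw_rec // Hn3 /= Hit4.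
    have := HwS n.-1; rewrite prednK; last by lia.
    rewrite Hn3 /st => E.
    nia.
apply: (@cross_wap Ai) => N.
pose M := (N + `|Ai|)%N.
have [n [Hn1 Hn2 Hn3 Hn4]] := Hpk (k ^ M)%N.
exists (k ^ M)%N, n; split.
  apply: leq_trans (ltnW (k_big M)); rewrite /M; lia.
split=> //; split=> //.
rewrite Hw_kpow; have := lam_pow_ge M Hl.
set P := lam ^+ M => HP.
rewrite /M in HP; nia.
Qed.


Lemma Gu_lower u j : - (b%:Z * j%:Z) <= Gu u j.
Proof.
elim: j => [|j IH]; first by rewrite /Gu big_geq //; lia.
rewrite GuS; case: (nth false u j); rewrite /st; lia.
Qed.

Lemma Gu_upper u ti : (forall j, (1 <= j)%N -> (j <= size u)%N -> nth false u j.-1 -> Gu u j <= ti) ->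
  forall j, (j <= size u)%N -> Gu u j <= 0 \/ Gu u j <= ti.
Proof.
move=> Ht; elim=> [|j IH] Hj; first by left; rewrite /Gu big_geq.
case E: (nth false u j).
- by right; apply: Ht => //=; rewrite E.
- have := IH (ltnW Hj); rewrite GuS E /st; lia.
Qed.

Section NotWap.
Variables (Ai ti : int).
Hypothesis Hl : 2 <= lam.
Hypothesis Hneg : forall j, (1 <= j)%N -> (j <= k)%N -> Gu u0 j < 0.
Hypothesis HA : forall j, (1 <= j)%N -> (j <= k)%N -> nth false u0 j.-1 -> Gu u0 j <= Ai.
Hypothesis HAneg : Ai <= -1.
Hypothesis Ht : forall j, (1 <= j)%N -> (j <= k)%N -> nth false u1 j.-1 -> Gu u1 j <= ti.
Hypothesis Hcond : lam * (Ai - c%:Z) + ti < Ai.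

Lemma k_ge3 : (3 <= k)%N.
Proof. have := ab; have := b_ge1; move: Hl; rewrite /lam; lia. Qed.

Lemma lam_le : lam <= k%:Z - 1.
Proof. have := ab; have := b_ge1; rewrite /lam; lia. Qed.

Lemma Gu0_le0 j : (j <= k)%N -> Gu u0 j <= 0.
Proof.
case: j => [|j] Hj; first by rewrite /Gu big_geq.
by apply: ltW; apply: Hneg.
Qed.

Lemma bound_up n : (1 <= n)%N -> forall m : nat,
  ((k ^ m <= n)%N -> Hw n <= -1 - m%:Z) /\
  (w n.-1 -> (m == 0%N) || (k ^ m < n)%N -> Hw n <= Ai - m%:Z).
Proof.
have k3 := k_ge3; have cpos := c_ge1; have bpos := b_ge1.
have Hup := @Gu_upper u1 ti; rewrite size1 in Hup; have Hup' := Hup Ht.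
elim/ltn_ind: n => n IH Hn m.
split.
- move=> Hkm.
  case: (ltnP n k) => Hnk.
    have Hm0 : m = 0%N.
      case: m Hkm => [|m] // Hkm; exfalso.
      have : (k ^ 1 <= k ^ m.+1)%N by apply: leq_pexp2l; lia.
      rewrite expn1; lia.
    rewrite Hm0 Hw_small; last exact: ltnW.
    have := Hneg _ Hn (ltnW Hnk); lia.
  set q := (n %/ k)%N; set j := (n %% k)%N.
  have En : n = (k * q + j)%N by rewrite /q /j mulnC -divn_eq.
  have Hj : (j < k)%N by rewrite /j ltn_pmod //; lia.
  have Hq1 : (1 <= q)%N by rewrite /q divn_gt0 //; lia.
  have Hqn : (q.+1 < n)%N by rewrite En; nia.
  have Hm' : (k ^ m.-1 <= q)%N.
    case: m Hkm => [|m] Hkm; first by rewrite expn0.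
    rewrite expnS En /= in Hkm.
    have : (k * k ^ m < k * q.+1)%N by rewrite mulnS; lia.
    by rewrite ltn_pmul2l ?ltnS //; lia.
  rewrite En Hw_rec; last exact: ltnW.
  case Ewq: (w q) => /=.
  + have [_ IHb] := IH q.+1 Hqn (ltn0Sn q) m.-1.
    have H1 := IHb Ewq (introT orP (or_intror (leq_ltn_trans Hm' (ltnSn q)))).
    have H2 := HwS q; rewrite Ewq /st in H2.
    have [H3|H3] := Hup' j (ltnW Hj); nia.
  + have [IHa _] := IH q (leq_ltn_trans (leqnSn q) Hqn) Hq1 m.-1.
    have H1 := IHa Hm'.
    have H3 := Gu0_le0 _ (ltnW Hj).
    nia.
- move=> Hwn Hm.
  case: (leqP n k) => Hnk.
    have Hm0 : m = 0%N.
      case: m Hm => [|m] // /orP[//|Hkm]; exfalso.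
      have : (k ^ 1 <= k ^ m.+1)%N by apply: leq_pexp2l; lia.
      rewrite expn1; lia.
    rewrite Hm0 Hw_small //.
    rewrite w_small in Hwn; last by lia.
    have := HA _ Hn Hnk Hwn; lia.
  set q := (n.-1 %/ k)%N; set j := (n.-1 %% k)%N.
  have En1 : n.-1 = (k * q + j)%N by rewrite /q /j mulnC -divn_eq.
  have En : n = (k * q + j.+1)%N by rewrite addnS -En1 prednK //.
  have Hj : (j < k)%N by rewrite /j ltn_pmod //; lia.
  have Hq1 : (1 <= q)%N by rewrite /q divn_gt0 //; lia.
  have Hqn : (q.+1 < n)%N by rewrite En; nia.
  have Hm' : (k ^ m.-1 <= q)%N.
    case: m Hm => [|m] Hkm; first by rewrite expn0.
    move: Hkm => /orP[//|Hkm].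
    rewrite expnS /= in Hkm.
    have : (k * k ^ m < k * q.+1)%N.
      rewrite mulnS; move: Hkm; rewrite En; lia.
    by rewrite ltn_pmul2l ?ltnS //; lia.
  rewrite En1 wE // in Hwn.
  rewrite En Hw_rec //.
  case Ewq: (w q) Hwn => /= Hwn.
  + have [_ IHb] := IH q.+1 Hqn (ltn0Sn q) m.-1.
    have H1 := IHb Ewq (introT orP (or_intror (leq_ltn_trans Hm' (ltnSn q)))).
    have H2 := HwS q; rewrite Ewq /st in H2.
    have H3 := Ht _ (ltn0Sn j) Hj Hwn.
    nia.
  + have [IHa _] := IH q (leq_ltn_trans (leqnSn q) Hqn) Hq1 m.-1.
    have H1 := IHa Hm'.
    have H3 := HA _ (ltn0Sn j) Hj Hwn.
    nia.
Qed.



Lemma Hw_le0 n : Hw n <= 0.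
Proof.
case: n => [|n]; first by rewrite /Hw big_geq.
have [H _] := bound_up _ (ltn0Sn n) 0; have := H (ltn0Sn n); lia.
Qed.

Lemma bound_low m n : (n < k ^ m.+1)%N ->
  - Hw n + k%:Z * (b%:Z + c%:Z) <= 2 * (k%:Z * (b%:Z + c%:Z)) * (k%:Z - 1) ^+ m.
Proof.
have k3 := k_ge3; have ll := lam_le.
set Gc := k%:Z * (b%:Z + c%:Z).
have HGc : 0 <= Gc by rewrite /Gc; lia.
have Glow : forall u j, (j <= k)%N -> - Gc <= Gu u j.
  move=> u j Hj; have := Gu_lower u j; rewrite /Gc; nia.
elim: m n => [|m IH] n Hn.
  rewrite expr0 mulr1; rewrite expn1 in Hn.
  rewrite Hw_small; last exact: ltnW.
  have := Glow u0 n (ltnW Hn); lia.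
set q := (n %/ k)%N; set j := (n %% k)%N.
have En : n = (k * q + j)%N by rewrite /q /j mulnC -divn_eq.
have Hj : (j < k)%N by rewrite /j ltn_pmod //; lia.
have Hq : (q < k ^ m.+1)%N by rewrite /q ltn_divLR; [rewrite -expnSr | lia].
have H1 := IH q Hq.
have H2 := Hw_le0 q.
have H3 := Glow (phi (w q)) j (ltnW Hj).
rewrite En Hw_rec; last exact: ltnW.
rewrite exprS.
set X := (k%:Z - 1) ^+ m in H1 *.
have H4 : - (lam * Hw q) <= (k%:Z - 1) * (- Hw q) by nia.
have H5 : (k%:Z - 1) * (- Hw q + Gc) <= (k%:Z - 1) * (2 * Gc * X).
  by apply: ler_wpM2l; lia.
nia.
Qed.

Lemma bern (K : int) m : 0 <= K -> (K + m%:Z) * K ^+ m <= K * (K + 1) ^+ m.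
Proof.
move=> HK; elim: m => [|m IH]; first by rewrite !expr0; lia.
rewrite !exprS.
have HX : 0 <= K ^+ m by apply: exprn_ge0.
set X := K ^+ m in IH HX *; set Y := (K + 1) ^+ m in IH *.
nia.
Qed.

Lemma not_wap : ~ weak_abelian_periodic w.
Proof.
move=> [p [Hp Hrho]].
have k3 := k_ge3; have bpos := b_ge1; have cpos := c_ge1.
pose L i := (p i.+1 - p i)%N.
pose z i := count_mem false (factor w (p i) (p i.+1)).
pose o i := count_mem true (factor w (p i) (p i.+1)).
have HL : forall i, (0 < L i)%N by move=> i; rewrite /L subn_gt0.
have Hzo : forall i, (z i + o i = L i)%N.
  by move=> i; rewrite /z /o count_bool size_factor.
have Hz : forall i, (z i * L 0 = z 0 * L i)%N.
  move=> i; have := Hrho false i 0; rewrite /rho !size_factor.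
  move/eqP; rewrite eqr_div; last 2 first.
  - by rewrite pnatr_eq0 -lt0n; exact: HL.
  - by rewrite pnatr_eq0 -lt0n; exact: HL.
  by rewrite -!natrM eqr_nat => /eqP.
have Hdiff : forall i, Hw (p i.+1) - Hw (p i) = c%:Z * (o i)%:Z - b%:Z * (z i)%:Z.
  by move=> i; rewrite Hw_diff //; exact: ltnW.
set S := c%:Z * (L 0)%:Z - (b%:Z + c%:Z) * (z 0)%:Z.
have Hpi : forall i, (p 0 + i <= p i)%N.
  elim=> [|i IH]; first by rewrite addn0.
  by rewrite addnS; apply: leq_ltn_trans IH _.
have Hsum : forall i, (L 0)%:Z * (Hw (p i) - Hw (p 0)) = S * ((p i)%:Z - (p 0)%:Z).
  elim=> [|i IH]; first by rewrite !subrr !mulr0.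
  have E1 := Hz i; have E2 := Hzo i; have E3 := Hdiff i.
  have E4 : (L i)%:Z = (p i.+1)%:Z - (p i)%:Z by rewrite /L; have := Hp i; lia.
  have E5 : (z i)%:Z * (L 0)%:Z = (z 0)%:Z * (L i)%:Z by rewrite -!PoszM E1.
  have E6 : (b%:Z + c%:Z) * ((z i)%:Z * (L 0)%:Z) = (b%:Z + c%:Z) * ((z 0)%:Z * (L i)%:Z).
    by rewrite E5.
  have E7 : (o i)%:Z = (L i)%:Z - (z i)%:Z by lia.
  have -> : Hw (p i.+1) - Hw (p 0) = (Hw (p i.+1) - Hw (p i)) + (Hw (p i) - Hw (p 0)) by ring.
  rewrite mulrDr IH E3 E7.
  rewrite /S; nia.
have HL0 : (1 <= (L 0)%:Z) by have := HL 0; lia.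
have : S < 0 \/ S = 0 \/ 0 < S by lia.
case=> [HS|[HS|HS]].
-
  set Gcn := (k * (b + c))%N.
  set M := ((k - 1) * p 0 + 2 * (k - 1) * L 0 * Gcn + 1)%N.
  set n := p (k ^ M)%N.
  have Hn1 : (k ^ M <= n)%N by have := Hpi (k ^ M)%N; rewrite /n; lia.
  have Hn0 : (0 < n)%N by apply: leq_trans Hn1; rewrite expn_gt0; lia.
  set m := trunc_log k n.
  have Hm1 : (k ^ m <= n)%N by apply: trunc_logP; lia.
  have Hm2 : (n < k ^ m.+1)%N by apply: trunc_log_ltn; lia.
  have HMm : (M <= m)%N.
    rewrite leqNgt; apply/negP => H.
    have : (k ^ m.+1 <= k ^ M)%N by apply: leq_pexp2l; lia.
    lia.
  have Hlow := bound_low _ _ Hm2.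
  have Hs := Hsum (k ^ M)%N; rewrite -/n in Hs.
  have Hp0 := Hw_le0 (p 0).
  have Hnp0 : (p 0 <= n)%N by have := Hpi (k ^ M)%N; rewrite /n; lia.
  have Hb : (k%:Z - 1 + m%:Z) * (k%:Z - 1) ^+ m <= (k%:Z - 1) * (k%:Z - 1 + 1) ^+ m.
    by apply: bern; lia.
  rewrite subrK in Hb.
  have Ekm : ((k ^ m)%N : int) = (k%:Z) ^+ m by lia.
  rewrite -Ekm in Hb.
  have HX : 1 <= (k%:Z - 1) ^+ m.
    have : 1 <= (k%:Z - 1) by lia.
    move=> H; by apply: exprn_ege1.
  set X := (k%:Z - 1) ^+ m in Hlow Hb HX.
  have HGc : (k%:Z * (b%:Z + c%:Z)) = Gcn%:Z by rewrite /Gcn; lia.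
  rewrite HGc in Hlow.
  have Hx : 0 <= n%:Z - (p 0)%:Z by rewrite subr_ge0 lez_nat.
  have HS1 : S <= -1 by lia.
  have H := arith1 _ _ HS1 Hx.
  rewrite -Hs in H.
  have H' : - Hw n <= 2 * Gcn%:Z * X by lia.
  have Step1 := arith2 _ _ _ _ _ HL0 Hp0 H' H.
  have Step2 : (k%:Z - 1 + m%:Z) * X <= (k%:Z - 1) * n%:Z.
    have : (k%:Z - 1) * (k ^ m)%N%:Z <= (k%:Z - 1) * n%:Z by apply: ler_wpM2l; lia.
    lia.
  have HMm' : (M%:Z <= m%:Z) by lia.
  rewrite /M in HMm'.
  have Ek1 : ((k - 1)%N : int) = k%:Z - 1 by lia.
  rewrite !PoszD !PoszM Ek1 in HMm'.
  by apply: (@arith_final (k%:Z - 1) m%:Z X n%:Z (p 0)%:Z (L 0)%:Z Gcn%:Z) => //; lia.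
-
  set M := (`|Hw (p 0)|).+1.
  have Hs := Hsum (k ^ M)%N; rewrite HS mul0r in Hs.
  have E : Hw (p (k ^ M)%N) = Hw (p 0) by nia.
  have H1 : (k ^ M <= p (k ^ M)%N)%N by have := Hpi (k ^ M)%N; lia.
  have H0 : (0 < p (k ^ M)%N)%N by apply: leq_trans H1; rewrite expn_gt0; lia.
  have [H2 _] := bound_up _ H0 M.
  have := H2 H1; rewrite E /M; lia.
-
  set i := (L 0 * `|Hw (p 0)|).+1.
  have Hs := Hsum i.
  have H1 := Hpi i.
  have H2 := Hw_le0 (p i).
  have H3a : (i%:Z) <= (p i)%:Z - (p 0)%:Z by rewrite lerBrDr -PoszD lez_nat addnC.
  have H3b : 1 <= S by lia.
  have H3 := arith3 _ _ _ H3b H3a (lez_nat 0 i).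
  rewrite -Hs in H3.
  have H4 : (`|Hw (p 0)|%N)%:Z = - Hw (p 0) by have := Hw_le0 (p 0); lia.
  have H5 : (L 0)%:Z * (Hw (p i) - Hw (p 0)) <= (L 0)%:Z * (- Hw (p 0)).
    by apply: ler_wpM2l; lia.
  have Ei : (i%:Z) = (L 0)%:Z * (- Hw (p 0)) + 1 by rewrite /i -addn1 PoszD PoszM H4.
  move: H3 H5 Ei; generalize (Hw (p i)) (Hw (p 0)) ((L 0)%:Z) (i%:Z) => A B C D.
  lia.
Qed.

End NotWap.


Lemma g0k (R : realType) : graphic b c u0 (k%:R : R) = (lam * - (b%:Z))%:~R.
Proof. by have := Gu_k false; rewrite /= /st => <-; rewrite graphic_nat // size0. Qed.

Lemma main (R : realType) :
  let g0 := @graphic R b c u0 in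
  [/\ (exists x : R, [/\ 0 < x, x <= k%:R & g0 x = 0]) -> weak_abelian_periodic w,
      g0 k%:R >= - (b%:R : R) -> weak_abelian_periodic w
    & (forall x : R, 0 < x -> x <= k%:R -> g0 x != 0) -> g0 k%:R < - (b%:R : R) ->
      let Delta := g0 k%:R in
      let A := max_after_one R b c u0 in
      let t := max_after_one R b c u1 in
      (weak_abelian_periodic w <->
         Delta * ((A - c%:R) / (- (b%:R : R))) + t >= A)].
Proof.
move=> g0; have bpos := b_ge1; have cpos := c_ge1.
split.
- move=> Hx; case: (leP lam 1) => Hl; first exact: case2.
  apply: case1; first by lia.
  exact: zero_pos Hx.
- rewrite /g0 g0k => Hg; apply: case2.
  have : (- (b%:Z)) <= lam * - (b%:Z).
    by rewrite -(ler_int R) intrN.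
  nia.
- move=> Hnz Hlt Delta A t; rewrite /g0 g0k in Hlt.
  have Hl : 2 <= lam.
    have : lam * - (b%:Z) < - (b%:Z) by rewrite -(ltr_int R) intrN.
    nia.
  have Hneg := @Gu0_neg R Hnz.
  have Hin0 : true \in u0.
    apply/negPn/negP => /count_memPn H; rewrite -/b in H; lia.
  have Hin1 : true \in u1.
    apply/negPn/negP => /count_memPn H; rewrite -/d in H.
    have := cd; have := ab; move: Hl; rewrite /lam; lia.
  have [[iA [HiA1 HiA2 HiA3 HiA4]] HA] := @peak_max R u0 Hin0.
  have [[it [Hit1 Hit2 Hit3 Hit4]] Ht] := @peak_max R u1 Hin1.
  rewrite size0 in HiA2 HA; rewrite size1 in Hit2 Ht.
  set Ai := Gu u0 iA in HiA4; set ti := Gu u1 it in Hit4.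
  have HAi : forall j, (1 <= j)%N -> (j <= k)%N -> nth false u0 j.-1 -> Gu u0 j <= Ai.
    by move=> j H1 H2 H3; rewrite -(ler_int R) -HiA4; apply: HA.
  have Hti : forall j, (1 <= j)%N -> (j <= k)%N -> nth false u1 j.-1 -> Gu u1 j <= ti.
    by move=> j H1 H2 H3; rewrite -(ler_int R) -Hit4; apply: Ht.
  have HAneg : Ai <= -1 by have := Hneg iA HiA1 HiA2; rewrite -/Ai; lia.
  have Ekey : Delta * ((A - c%:R) / (- (b%:R : R))) + t =
      ((lam * (Ai - c%:Z) + ti)%:~R : R).
    rewrite /Delta /g0 g0k /A /t HiA4 Hit4 intrD !intrM intrB intrN.
    have Hb0 : (b%:R : R) != 0 by rewrite pnatr_eq0; lia.
    rewrite [((b%:Z)%:~R : R)]/= [((c%:Z)%:~R : R)]/=.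
    field.
    exact: Hb0.
  rewrite Ekey /A HiA4 ler_int.
  split.
  + move=> Hw; case: (leP Ai (lam * (Ai - c%:Z) + ti)) => // Hc.
    exfalso; exact: (@not_wap Ai ti Hl Hneg HAi HAneg Hti Hc Hw).
  + move=> Hc; exact: (@case3_wap Ai ti iA it Hl HiA1 HiA2 HiA3 erefl Hit1 Hit2 Hit3 erefl Hc).
Qed.

End Main.

Theorem theorem1 (R : realType) (k : nat) (u0 u1 : seq bool) (w : nat -> bool) :
  uniform k u0 u1 ->
  primitive u0 u1 ->
  nth true u0 0 = false ->
  is_fixed_point_from0 u0 u1 w ->
  let b := count_mem true u0 in
  let c := count_mem false u1 in
  let g0 := @graphic R b c u0 in
  [/\ (exists x : R, [/\ 0 < x, x <= k%:R & g0 x = 0]) -> weak_abelian_periodic w,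
      g0 k%:R >= - (b%:R : R) -> weak_abelian_periodic w
    & (forall x : R, 0 < x -> x <= k%:R -> g0 x != 0) -> g0 k%:R < - (b%:R : R) ->
      let Delta := g0 k%:R in
      let A := max_after_one R b c u0 in
      let t := max_after_one R b c u1 in
      (weak_abelian_periodic w <->
         Delta * ((A - c%:R) / (- (b%:R : R))) + t >= A)].
Proof.
move=> Hu Hp H0 Hf; exact: (@main k u0 u1 w Hu Hp H0 Hf R).
Qed.
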